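(* Let $(X,d,f)$ be a dynamical system with $f$ uniformly continuous, and let $\mathcal{A}=\{\mathcal{U}_n\}_{n\in\mathbb{N}}$ be a complete tame defining sequence of $(X,d)$. Then $f$ has the shadowing property if and only if $(X,d,f)$ is uniformly conjugate to an inverse limit dynamical system whose associated inverse system consists of a sequence of 1-step shifts on countable alphabets, with uniformly continuous bonding maps, and satisfies the Mittag-Leffler Condition.
   Context: All spaces are nonempty separable metrizable. A dynamical system $(X,d,f)$: admissible metric $d$, continuous $f:X\to X$. A partition of $X$ is a cover by pairwise disjoint nonempty clopen sets. A defining sequence is a sequence $\{\mathcal{U}_n\}$ of partitions, each refining the previous, whose union is a basis of the topology; complete if every nested sequence $U_n\in\mathcal{U}_n$, $U_{n+1}\subseteq U_n$, has nonempty intersection; tame (w.r.t. $d$) if $\sup\{\operatorname{diam}O:O\in\mathcal{U}_n\}\to0$ and each $\mathcal{U}_n$ is $\rho_n$-separated for some $\rho_n>0$ (points in distinct elements are at distance $\ge\rho_n$). Shadowing property: for every $\varepsilon>0$ there is $\delta>0$ such that every infinite sequence $(x_n)$ with $d(f(x_n),x_{n+1})<\delta$ for all $n$ admits $x$ with $d(f^n(x),x_n)<\varepsilon$ for all $n$. A 1-step shift on a countable alphabet $A$ is a closed shift-invariant subset $Y\subseteq A^{\mathbb{N}}$ of the form $Y=\{y: y \text{ contains no word of } F\}$ for a set $F$ of words of length 2, with the shift map $\sigma$ and metric $d(y,z)=1/(i+1)$, $i$ least index with $y_i\ne z_i$. Given dynamical systems $(X_m,d_m,f_m)$ with metrics bounded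 by 1 and continuous bonding maps $g_m:X_{m+1}\to X_m$ with $f_m\circ g_m=g_m\circ f_{m+1}$, the inverse limit dynamical system is $\varprojlim(g_m,X_m)=\{(x_m)\in\prod X_m: x_m=g_m(x_{m+1})\}$ with metric $d_\Pi((x_m),(y_m))=\max_m d_m(x_m,y_m)/(m+1)$ and map the restriction of $\prod_m f_m$. The inverse system satisfies the Mittag-Leffler Condition if for every $N$ there is $k>N$ with $g_N\circ\cdots\circ g_k(X_{k+1})=g_N\circ\cdots\circ g_i(X_{i+1})$ for all $i\ge k$. Dynamical systems $(X,d_1,f)$, $(Y,d_2,g)$ are uniformly conjugate if there is a surjective homeomorphism $h:X\to Y$ with $h,h^{-1}$ uniformly continuous and $h\circ f=g\circ h$. *)

(* Defs.v *)
From Stdlib Require Import Reals.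
From Coquelicot Require Import Coquelicot.
Open Scope R_scope.

Definition is_metric {X : Type} (d : X -> X -> R) : Prop :=
  (forall x y, 0 <= d x y) /\ (forall x y, d x y = 0 <-> x = y) /\
  (forall x y, d x y = d y x) /\ (forall x y z, d x z <= d x y + d y z).

(* the topology is the one induced by d, so d is admissible by construction *)
Definition separable {X : Type} (d : X -> X -> R) : Prop :=
  exists D : nat -> X, forall x eps, 0 < eps -> exists n, d x (D n) < eps.

Definition d_open {X : Type} (d : X -> X -> R) (O : X -> Prop) : Prop :=
  forall x, O x -> exists r, 0 < r /\ forall y, d x y < r -> O y.
Definition d_closed {X : Type} (d : X -> X -> R) (C : X -> Prop) : Prop :=
  d_open d (fun x => ~ C x).
Definition d_clopen {X : Type} (d : X -> X -> R) (O : X -> Prop) : Prop :=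
  d_open d O /\ d_closed d O.

Definition unif_cont {X Y : Type} (dX : X -> X -> R) (dY : Y -> Y -> R)
  (h : X -> Y) : Prop :=
  forall eps, 0 < eps -> exists delta, 0 < delta /\
    forall x y, dX x y < delta -> dY (h x) (h y) < eps.

Definition is_partition {X : Type} (d : X -> X -> R) (P : (X -> Prop) -> Prop) : Prop :=
  (forall O, P O -> (exists x, O x) /\ d_clopen d O) /\
  (forall O O', P O -> P O' -> O <> O' -> forall x, ~ (O x /\ O' x)) /\
  (forall x, exists O, P O /\ O x).

Definition defining_sequence {X : Type} (d : X -> X -> R)
  (U : nat -> (X -> Prop) -> Prop) : Prop :=
  (forall n, is_partition d (U n)) /\
  (forall n O, U (S n) O -> exists O', U n O' /\ forall x, O x -> O' x) /\
  (forall W x, d_open d W -> W x ->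
     exists n O, U n O /\ O x /\ forall y, O y -> W y).

Definition complete_seq {X : Type} (U : nat -> (X -> Prop) -> Prop) : Prop :=
  forall V : nat -> X -> Prop,
    (forall n, U n (V n)) -> (forall n x, V (S n) x -> V n x) ->
    exists x, forall n, V n x.

Definition tame_seq {X : Type} (d : X -> X -> R) (U : nat -> (X -> Prop) -> Prop) : Prop :=
  (forall eps, 0 < eps -> exists N, forall n, (N <= n)%nat ->
     forall O, U n O -> forall x y, O x -> O y -> d x y < eps) /\
  (forall n, exists rho, 0 < rho /\ forall O O', U n O -> U n O' -> O <> O' ->
     forall x y, O x -> O' y -> rho <= d x y).

Definition shadowing {X : Type} (d : X -> X -> R) (f : X -> X) : Prop :=
  forall eps, 0 < eps -> exists delta, 0 < delta /\
    forall xs : nat -> X, (forall n, d (f (xs n)) (xs (S n)) < delta) ->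
      exists x, forall n, d (Nat.iter n f x) (xs n) < eps.

Definition countable (A : Type) : Prop :=
  exists c : A -> nat, forall a b, c a = c b -> a = b.

(* the 1-step shift defined by a set F of forbidden words of length 2 *)
Definition shift_space (A : Type) (F : A -> A -> Prop) : Type :=
  { y : nat -> A | forall i, ~ F (y i) (y (S i)) }.

(* d(y,z) = 1/(i+1), i least index with y_i <> z_i (0 if y = z);
   written as the maximum of {0} U {1/(i+1) | y_i <> z_i} *)
Definition seq_dist {A : Type} (y z : nat -> A) : R :=
  real (Lub_Rbar (fun r => r = 0 \/ exists i, y i <> z i /\ r = / INR (S i))).

Definition shift_dist {A : Type} {F : A -> A -> Prop} (y z : shift_space A F) : R :=
  seq_dist (proj1_sig y) (proj1_sig z).

Definition shift_map {A : Type} {F : A -> A -> Prop} (y : shift_space A F) : shift_space A F :=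
  exist (fun y => forall i, ~ F (y i) (y (S i)))
        (fun i => proj1_sig y (S i)) (fun i => proj2_sig y (S i)).

Definition inv_limit (Xs : nat -> Type) (g : forall m, Xs (S m) -> Xs m) : Type :=
  { x : forall m, Xs m | forall m, x m = g m (x (S m)) }.

Definition dPi {Xs : nat -> Type} (ds : forall m, Xs m -> Xs m -> R)
  {g : forall m, Xs (S m) -> Xs m} (x y : inv_limit Xs g) : R :=
  real (Lub_Rbar (fun r => r = 0 \/
     exists m, r = ds m (proj1_sig x m) (proj1_sig y m) / INR (S m))).

(* gcomp g N j = g_N o g_(N+1) o ... o g_(N+j-1) : X_(j+N) -> X_N *)
Fixpoint gcomp (Xs : nat -> Type) (g : forall m, Xs (S m) -> Xs m) (N j : nat)
  : Xs (j + N)%nat -> Xs N :=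
  match j return Xs (j + N)%nat -> Xs N with
  | O => fun x => x
  | S j' => fun x => gcomp Xs g N j' (g (j' + N)%nat x)
  end.

Definition gimage (Xs : nat -> Type) (g : forall m, Xs (S m) -> Xs m) (N j : nat)
  (y : Xs N) : Prop := exists x, y = gcomp Xs g N j x.

(* g_N o ... o g_i (X_(i+1)) is gimage N (i+1-N) *)
Definition mittag_leffler (Xs : nat -> Type) (g : forall m, Xs (S m) -> Xs m) : Prop :=
  forall N, exists k, (N < k)%nat /\ forall i, (k <= i)%nat ->
    forall y, gimage Xs g N (S k - N) y <-> gimage Xs g N (S i - N) y.

(* Main.v *)
Require Import Defs.
From Stdlib Require Import Reals.
From Coquelicot Require Import Coquelicot.
From Stdlib Require Import Lra Lia Classical FunctionalExtensionality ProofIrrelevance IndefiniteDescription.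
Open Scope R_scope.

Lemma lub_facts (E : R -> Prop) : E 0 -> (forall r, E r -> r <= 1) ->
  (forall r, E r -> r <= real (Lub_Rbar E)) /\
  (forall b, (forall r, E r -> r <= b) -> real (Lub_Rbar E) <= b).
Proof.
  intros H0 H1.
  destruct (Lub_Rbar_correct E) as [Hub Hl].
  assert (Hle1 : Rbar_le (Lub_Rbar E) 1).
  { apply Hl. intros x Hx. simpl. apply H1; auto. }
  assert (Hge0 : Rbar_le 0 (Lub_Rbar E)) by (apply Hub; auto).
  destruct (Lub_Rbar E) as [l| |] eqn:HL; simpl in *; try contradiction.
  split.
  - intros r Hr. specialize (Hub r Hr). simpl in Hub. auto.
  - intros b Hb. specialize (Hl (Finite b)). simpl in Hl. apply Hl.
    intros x Hx. simpl. auto.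
Qed.

Lemma INR_S_ge1 (i : nat) : 1 <= INR (S i).
Proof. rewrite S_INR. pose proof (pos_INR i). lra. Qed.

Lemma inv_S_le1 (i : nat) : / INR (S i) <= 1.
Proof. pose proof (INR_S_ge1 i). rewrite <- Rinv_1. apply Rinv_le_contravar; lra. Qed.

Lemma inv_S_pos (i : nat) : 0 < / INR (S i).
Proof. pose proof (INR_S_ge1 i). apply Rinv_0_lt_compat. lra. Qed.

Lemma inv_S_mono (i j : nat) : (i <= j)%nat -> / INR (S j) <= / INR (S i).
Proof.
  intros H. pose proof (INR_S_ge1 i). apply Rinv_le_contravar; [lra|].
  apply le_INR. lia.
Qed.

Lemma exists_small (eps : R) : 0 < eps -> exists L : nat, / INR (S L) < eps.
Proof.
  intros He. destruct (INR_archimed eps 1 He) as [n Hn].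
  exists n. pose proof (pos_INR n).
  assert (Hs : 0 < INR (S n)) by (pose proof (INR_S_ge1 n); lra).
  rewrite S_INR in *.
  apply (Rmult_lt_reg_l (INR n + 1)); auto.
  rewrite Rinv_r by lra. lra.
Qed.

Section SeqDist.
Context {A : Type}.

Definition sdset (y z : nat -> A) := fun r => r = 0 \/ exists i, y i <> z i /\ r = / INR (S i).

Lemma sdset_facts (y z : nat -> A) : sdset y z 0 /\ (forall r, sdset y z r -> r <= 1).
Proof.
  split. left; auto.
  intros r [->|[i [_ ->]]]. lra. apply inv_S_le1.
Qed.

Lemma seq_dist_ge (y z : nat -> A) i : y i <> z i -> / INR (S i) <= seq_dist y z.
Proof.
  intros H. destruct (sdset_facts y z) as [H0 H1].
  destruct (lub_facts _ H0 H1) as [Hu _]. apply Hu. right. eauto.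
Qed.

Lemma seq_dist_nonneg (y z : nat -> A) : 0 <= seq_dist y z.
Proof.
  destruct (sdset_facts y z) as [H0 H1].
  destruct (lub_facts _ H0 H1) as [Hu _]. apply Hu. left; auto.
Qed.

Lemma seq_dist_le1 (y z : nat -> A) : seq_dist y z <= 1.
Proof.
  destruct (sdset_facts y z) as [H0 H1].
  destruct (lub_facts _ H0 H1) as [_ Hl]. apply Hl. auto.
Qed.

Lemma seq_dist_le (y z : nat -> A) b : 0 <= b ->
  (forall i, y i <> z i -> / INR (S i) <= b) -> seq_dist y z <= b.
Proof.
  intros Hb H. destruct (sdset_facts y z) as [H0 H1].
  destruct (lub_facts _ H0 H1) as [_ Hl]. apply Hl.
  intros r [->|[i [Hi ->]]]; auto.
Qed.
End SeqDist.

Definition agree {A : Type} (L : nat) (y z : nat -> A) := forall i, (i <= L)%nat -> y i = z i.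

Lemma sd_small (eps : R) : 0 < eps -> exists L, forall A (y z : nat -> A), agree L y z -> seq_dist y z < eps.
Proof.
  intros He. destruct (exists_small eps He) as [L HL]. exists L.
  intros A y z Hag.
  apply Rle_lt_trans with (/ INR (S L)); auto.
  apply seq_dist_le. left; apply inv_S_pos.
  intros i Hi. apply inv_S_mono.
  destruct (Compare_dec.le_lt_dec i L) as [h|h]; [exfalso; apply Hi; apply Hag; auto | lia].
Qed.

Lemma sd_agree {A : Type} (L : nat) (y z : nat -> A) : seq_dist y z < / INR (S L) -> agree L y z.
Proof.
  intros H i Hi. apply NNPP. intros Hne.
  pose proof (seq_dist_ge y z i Hne). pose proof (inv_S_mono i L Hi). lra.
Qed.

Lemma shift_dist_bounds {A} {F : A -> A -> Prop} (u v : shift_space A F) :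
  0 <= shift_dist u v <= 1.
Proof. unfold shift_dist. split; [apply seq_dist_nonneg|apply seq_dist_le1]. Qed.

Lemma uc_shift_of_agree {A B} {F : A -> A -> Prop} {G : B -> B -> Prop}
  (H : shift_space A F -> shift_space B G) :
  (forall L, exists L', forall u v, agree L' (proj1_sig u) (proj1_sig v) ->
      agree L (proj1_sig (H u)) (proj1_sig (H v))) ->
  unif_cont shift_dist shift_dist H.
Proof.
  intros Hag eps He. destruct (sd_small eps He) as [L HL].
  destruct (Hag L) as [L' HL'].
  exists (/ INR (S L')). split. apply inv_S_pos.
  intros x y Hxy. unfold shift_dist. apply HL. apply HL'. apply sd_agree. auto.
Qed.

Lemma agree_of_uc_shift {A B} {F : A -> A -> Prop} {G : B -> B -> Prop}
  (H : shift_space A F -> shift_space B G) :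
  unif_cont shift_dist shift_dist H ->
  (forall L, exists L', forall u v, agree L' (proj1_sig u) (proj1_sig v) ->
      agree L (proj1_sig (H u)) (proj1_sig (H v))).
Proof.
  intros Huc L. destruct (Huc (/ INR (S L)) (inv_S_pos L)) as [dl [Hd Hdl]].
  destruct (sd_small dl Hd) as [L' HL']. exists L'.
  intros u v Huv. apply sd_agree. apply Hdl. apply HL'. auto.
Qed.

Lemma shift_ext {A} {F : A -> A -> Prop} (u v : shift_space A F) :
  (forall i, proj1_sig u i = proj1_sig v i) -> u = v.
Proof.
  destruct u as [u pu], v as [v pv]. simpl. intros H.
  assert (u = v) by (apply functional_extensionality; auto). subst.
  f_equal. apply proof_irrelevance.
Qed.

Lemma iter_shift {A} {F : A -> A -> Prop} (n : nat) (y : shift_space A F) i :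
  proj1_sig (Nat.iter n shift_map y) i = proj1_sig y (n + i)%nat.
Proof.
  revert i. induction n; intros i; simpl; auto.
  rewrite IHn. f_equal. lia.
Qed.

Section DPi.
Context {Xs : nat -> Type} (ds : forall m, Xs m -> Xs m -> R) {g : forall m, Xs (S m) -> Xs m}.
Hypothesis ds_b : forall m x y, 0 <= ds m x y <= 1.

Definition dpset (x y : inv_limit Xs g) := fun r => r = 0 \/
     exists m, r = ds m (proj1_sig x m) (proj1_sig y m) / INR (S m).

Lemma dpset_facts x y : dpset x y 0 /\ forall r, dpset x y r -> r <= 1.
Proof.
  split. left; auto. intros r [->|[m ->]]. lra.
  destruct (ds_b m (proj1_sig x m) (proj1_sig y m)).
  pose proof (inv_S_le1 m). pose proof (inv_S_pos m). unfold Rdiv.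
  apply Rle_trans with (1 * 1); [|lra]. apply Rmult_le_compat; lra.
Qed.

Lemma dPi_ge x y m : ds m (proj1_sig x m) (proj1_sig y m) / INR (S m) <= @dPi Xs ds g x y.
Proof.
  destruct (dpset_facts x y) as [H0 H1]. destruct (lub_facts _ H0 H1) as [Hu _].
  apply Hu. right; eauto.
Qed.

Lemma dPi_le x y b : 0 <= b ->
  (forall m, ds m (proj1_sig x m) (proj1_sig y m) / INR (S m) <= b) -> @dPi Xs ds g x y <= b.
Proof.
  intros Hb H. destruct (dpset_facts x y) as [H0 H1]. destruct (lub_facts _ H0 H1) as [_ Hl].
  apply Hl. intros r [->|[m ->]]; auto.
Qed.

Lemma dPi_level x y m th : @dPi Xs ds g x y < th -> ds m (proj1_sig x m) (proj1_sig y m) < th * INR (S m).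
Proof.
  intros H. pose proof (dPi_ge x y m). pose proof (INR_S_ge1 m).
  unfold Rdiv in *. 
  apply (Rmult_lt_reg_r (/ INR (S m))). apply inv_S_pos.
  rewrite Rmult_assoc, Rinv_r, Rmult_1_r by lra. lra.
Qed.

Lemma dPi_small_gen eps : 0 < eps -> exists M, forall x y,
  (forall m, (m <= M)%nat -> ds m (proj1_sig x m) (proj1_sig y m) <= eps / 2) -> @dPi Xs ds g x y < eps.
Proof.
  intros He. destruct (exists_small (eps/2)) as [M HM]. lra.
  exists M. intros x y H.
  apply Rle_lt_trans with (eps/2); [|lra].
  apply dPi_le. lra. intros m.
  pose proof (inv_S_pos m). pose proof (inv_S_le1 m). unfold Rdiv at 1.
  destruct (Compare_dec.le_lt_dec m M) as [h|h].
  - specialize (H m h). destruct (ds_b m (proj1_sig x m) (proj1_sig y m)).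
    apply Rle_trans with ((eps/2) * 1); [|lra]. apply Rmult_le_compat; lra.
  - destruct (ds_b m (proj1_sig x m) (proj1_sig y m)).
    pose proof (inv_S_mono M m ltac:(lia)).
    apply Rle_trans with (1 * / INR (S M)); [|lra]. apply Rmult_le_compat; lra.
Qed.
End DPi.

Section ShiftLim.
Context {A : nat -> Type} {F : forall m, A m -> A m -> Prop}
  {g : forall m, shift_space (A (S m)) (F (S m)) -> shift_space (A m) (F m)}.
Let Xs := fun m => shift_space (A m) (F m).
Let dP := dPi (fun m => @shift_dist (A m) (F m)) (g := g).

Lemma dP_small eps : 0 < eps -> exists M L, forall x y : inv_limit Xs g,
  (forall m, (m <= M)%nat -> agree L (proj1_sig (proj1_sig x m)) (proj1_sig (proj1_sig y m))) -> dP x y < eps.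
Proof.
  intros He. destruct (dPi_small_gen (fun m => @shift_dist (A m) (F m)) (g := g)
    (fun m x y => shift_dist_bounds x y) eps He) as [M HM].
  destruct (sd_small (eps/2)) as [L HL]. lra.
  exists M, L. intros x y H. apply HM. intros m Hm. left. apply HL. auto.
Qed.

Lemma dP_agree m L : exists th, 0 < th /\ forall x y : inv_limit Xs g, dP x y < th ->
  agree L (proj1_sig (proj1_sig x m)) (proj1_sig (proj1_sig y m)).
Proof.
  exists (/ INR (S L) / INR (S m)). split.
  { unfold Rdiv. apply Rmult_lt_0_compat; apply inv_S_pos || (pose proof (INR_S_ge1 m); apply Rinv_0_lt_compat; lra). }
  intros x y H. apply sd_agree.
  pose proof (dPi_level (fun m => @shift_dist (A m) (F m)) (fun m x y => shift_dist_bounds x y) x y m _ H) as H2.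
  unfold shift_dist in H2. pose proof (INR_S_ge1 m).
  unfold Rdiv in H2. rewrite Rmult_assoc, Rinv_l, Rmult_1_r in H2 by lra. auto.
Qed.
End ShiftLim.

Section Chains.
Context {Xs : nat -> Type} (g : forall m, Xs (S m) -> Xs m).

Definition chain (c : forall m, Xs m) (a b : nat) :=
  forall m, (a <= m)%nat -> (m < b)%nat -> c m = g m (c (S m)).
Definition stim (N T : nat) (y : Xs N) := exists c, chain c N T /\ c N = y.

Definition upd (c : forall m, Xs m) (i : nat) (v : Xs i) : forall m, Xs m :=
  fun m => match PeanoNat.Nat.eq_dec i m with
           | left e => eq_rect i Xs v m e
           | right _ => c m end.

Lemma upd_eq c i v : upd c i v i = v.
Proof.
  unfold upd. destruct (PeanoNat.Nat.eq_dec i i) as [e|e]; [|congruence].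
  symmetry. apply Eqdep_dec.eq_rect_eq_dec. apply PeanoNat.Nat.eq_dec.
Qed.

Lemma upd_neq c i v m : i <> m -> upd c i v m = c m.
Proof. intros H. unfold upd. destruct (PeanoNat.Nat.eq_dec i m); congruence. Qed.

Lemma chain_restrict c a b a' b' : chain c a b -> (a <= a')%nat -> (b' <= b)%nat -> chain c a' b'.
Proof. intros H H1 H2 m Hm1 Hm2. apply H; lia. Qed.

Lemma stim_mono N T T' y : stim N T y -> (T' <= T)%nat -> stim N T' y.
Proof. intros [c [Hc Hy]] H. exists c. split; auto. eapply chain_restrict; eauto. Qed.

Lemma chain_gcomp N j c : chain c N (j + N) -> c N = gcomp Xs g N j (c (j + N)%nat).
Proof.
  revert c. induction j; intros c Hc.
  - reflexivity.
  - simpl. rewrite <- (Hc (j + N)%nat) by lia. apply IHj.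
    eapply chain_restrict; eauto; lia.
Qed.

Lemma gcomp_chain (d0 : forall m, Xs m) N j (x : Xs (j + N)%nat) :
  exists c, chain c N (j + N) /\ c (j + N)%nat = x.
Proof.
  revert x. induction j; intros x.
  - exists (upd d0 N x). split. intros m h1 h2. simpl in h2. lia. apply upd_eq.
  - destruct (IHj (g (j + N)%nat x)) as [c [Hc Hx]].
    exists (upd c (S (j + N)) x). split.
    + intros m h1 h2. simpl in h2.
      change (S j + N)%nat with (S (j + N)) in *.
      rewrite (upd_neq c (S (j + N)) x m) by lia.
      destruct (PeanoNat.Nat.eq_dec m (j + N)) as [e|e].
      * subst m. rewrite upd_eq. auto.
      * rewrite (upd_neq c (S (j + N)) x (S m)) by lia. apply Hc; lia.
    + apply upd_eq.
Qed.

Lemma gimage_stim (d0 : forall m, Xs m) N j y : gimage Xs g N j y <-> stim N (j + N) y.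
Proof.
  split.
  - intros [x ->]. destruct (gcomp_chain d0 N j x) as [c [Hc Hx]].
    exists c. split; auto. rewrite (chain_gcomp N j c Hc). rewrite Hx. auto.
  - intros [c [Hc Hy]]. exists (c (j + N)%nat). rewrite <- Hy. apply chain_gcomp; auto.
Qed.

Lemma ml_stim (d0 : forall m, Xs m) : mittag_leffler Xs g ->
  forall N, exists K, (N < K)%nat /\ forall y, stim N (S K) y -> forall T, stim N T y.
Proof.
  intros Hml N. destruct (Hml N) as [K [HK H]]. exists K. split; auto.
  intros y Hy T.
  apply stim_mono with (S (Nat.max K T)); [|lia].
  assert (E1 : (S K - N + N = S K)%nat) by lia.
  assert (E2 : (S (Nat.max K T) - N + N = S (Nat.max K T))%nat) by lia.
  rewrite <- E2. apply (proj1 (gimage_stim d0 N _ y)). apply (H (Nat.max K T)). lia.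
  apply (proj2 (gimage_stim d0 N _ y)). rewrite E1. auto.
Qed.

Lemma stim_ml (d0 : forall m, Xs m) :
  (forall N, exists K, (N < K)%nat /\ forall i, (K <= i)%nat -> forall y, stim N (S K) y <-> stim N (S i) y) ->
  mittag_leffler Xs g.
Proof.
  intros H N. destruct (H N) as [K [HK H2]]. exists K. split; auto.
  intros i Hi y.
  assert (E1 : (S K - N + N = S K)%nat) by lia.
  assert (E2 : (S i - N + N = S i)%nat) by lia.
  rewrite !(gimage_stim d0). rewrite E1, E2. auto.
Qed.

Definition stab N (y : Xs N) := forall T, stim N T y.

Lemma stab_lift (Kf : nat -> nat) :
  (forall N y, stim N (S (Kf N)) y -> stab N y) ->
  forall N y, stab N y -> exists y', stab (S N) y' /\ g N y' = y.
Proof.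
  intros HK N y Hy.
  destruct (Hy (S (S (Kf (S N)) + S N))) as [c [Hc Hcy]].
  exists (c (S N)). split.
  - apply HK. exists c. split; auto. eapply chain_restrict; eauto; lia.
  - rewrite <- Hcy. symmetry. apply Hc; lia.
Qed.

Lemma lift_limit (Kf : nat -> nat) :
  (forall N y, stim N (S (Kf N)) y -> stab N y) ->
  forall N c, chain c 0 N -> stab N (c N) ->
  exists p : inv_limit Xs g, forall m, (m <= N)%nat -> proj1_sig p m = c m.
Proof.
  intros HK N c0 Hc0 Hs0.
  set (St := fun n => {c : forall m, Xs m | chain c 0 (n + N) /\ stab (n + N) (c (n + N)%nat)}).
  assert (step : forall n (s : St n), exists s' : St (S n),
            forall m, (m <= n + N)%nat -> proj1_sig s' m = proj1_sig s m).
  { intros n [c [Hc Hs]]. simpl.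
    destruct (stab_lift Kf HK _ _ Hs) as [y' [Hy' Hg]].
    assert (P : chain (upd c (S (n + N)) y') 0 (S n + N) /\
                stab (S n + N) (upd c (S (n + N)) y' (S n + N)%nat)).
    { split.
      - intros m h1 h2. simpl in h2.
        rewrite (upd_neq c _ y' m) by lia.
        destruct (PeanoNat.Nat.eq_dec m (n + N)) as [e|e].
        + subst m. rewrite upd_eq. auto.
        + rewrite (upd_neq c _ y' (S m)) by lia. apply Hc; lia.
      - simpl. rewrite upd_eq. auto. }
    exists (exist (fun c => chain c 0 (S n + N) /\ stab (S n + N) (c (S n + N)%nat)) _ P). simpl. intros m Hm. apply upd_neq. lia. }
  set (s0 := exist (fun c => chain c 0%nat (0 + N)%nat /\ stab (0 + N)%nat (c (0 + N)%nat)) c0 (conj Hc0 Hs0) : St 0%nat).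
  set (seq := fix seq (n : nat) : St n := match n with
      | O => s0
      | S n' => proj1_sig (constructive_indefinite_description _ (step n' (seq n'))) end).
  assert (Hstep : forall n m, (m <= n + N)%nat -> proj1_sig (seq (S n)) m = proj1_sig (seq n) m).
  { intros n m Hm.
    assert (Hseq : seq (S n) = proj1_sig (constructive_indefinite_description _ (step n (seq n)))) by reflexivity.
    rewrite Hseq. clear Hseq.
    destruct (constructive_indefinite_description _ (step n (seq n))) as [s' Hs']. simpl. auto. }
  assert (Hmono : forall a b m, (a <= b)%nat -> (m <= a + N)%nat -> proj1_sig (seq b) m = proj1_sig (seq a) m).
  { intros a b m Hab. induction Hab; intros Hm; auto.
    rewrite Hstep by lia. auto. }
  assert (Hp : forall m, (fun m => proj1_sig (seq m) m) m = g m ((fun m => proj1_sig (seq m) m) (S m))).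
  { intros m. simpl.
    rewrite <- (Hmono m (S m) m) by lia.
    destruct (proj2_sig (seq (S m))) as [Hc _]. apply Hc; lia. }
  exists (exist _ (fun m => proj1_sig (seq m) m) Hp). simpl.
  intros m Hm. rewrite (Hmono 0%nat m m) by lia. reflexivity.
Qed.
End Chains.

Lemma agree_mono {B} L L' (y z : nat -> B) : agree L' y z -> (L <= L')%nat -> agree L y z.
Proof. intros H h i hi. apply H. lia. Qed.

Lemma ml_Kf {Xs : nat -> Type} (g : forall m, Xs (S m) -> Xs m) (d0 : forall m, Xs m) :
  mittag_leffler Xs g -> exists Kf : nat -> nat, forall N, (N < Kf N)%nat /\
     forall y, stim g N (S (Kf N)) y -> stab g N y.
Proof.
  intros Hml.
  exists (fun N => proj1_sig (constructive_indefinite_description _ (ml_stim g d0 Hml N))).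
  intros N. destruct (constructive_indefinite_description _ (ml_stim g d0 Hml N)) as [K HK].
  simpl. exact HK.
Qed.

Lemma down_chain {Xs : nat -> Type} (g : forall m, Xs (S m) -> Xs m) (d0 : forall m, Xs m) :
  forall T (x : Xs T), exists c, chain g c 0 T /\ c T = x.
Proof.
  induction T; intros x.
  - exists (upd d0 0 x). split. intros m h1 h2. lia. apply upd_eq.
  - destruct (IHT (g T x)) as [c [Hc Hx]].
    exists (upd c (S T) x). split.
    + intros m h1 h2.
      rewrite (upd_neq c (S T) x m) by lia.
      destruct (PeanoNat.Nat.eq_dec m T) as [e|e].
      * subst m. rewrite upd_eq. auto.
      * rewrite (upd_neq c (S T) x (S m)) by lia. apply Hc; lia.
    + apply upd_eq.
Qed.

Lemma invlim_chain {Xs : nat -> Type} (g : forall m, Xs (S m) -> Xs m) (p : inv_limit Xs g) a b :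
  chain g (proj1_sig p) a b.
Proof. intros m _ _. apply (proj2_sig p). Qed.

Section Reverse.
Context {A : nat -> Type} {F : forall m, A m -> A m -> Prop}
  (g : forall m, shift_space (A (S m)) (F (S m)) -> shift_space (A m) (F m)).
Hypothesis Hguc : forall m, unif_cont shift_dist shift_dist (g m).
Hypothesis Hgcomm : forall m y, g m (shift_map y) = shift_map (g m y).

Lemma g_iter m n y : g m (Nat.iter n shift_map y) = Nat.iter n shift_map (g m y).
Proof. induction n; simpl; auto. rewrite Hgcomm, IHn. auto. Qed.

Lemma chain_iter (c : forall m, shift_space (A m) (F m)) a b n :
  chain g c a b -> chain g (fun m => Nat.iter n shift_map (c m)) a b.
Proof. intros H m h1 h2. simpl. rewrite H by auto. rewrite g_iter. auto. Qed.

Lemma levels_agree a b L : exists L', forall c c' : forall m, shift_space (A m) (F m),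
  chain g c a b -> chain g c' a b -> agree L' (proj1_sig (c b)) (proj1_sig (c' b)) ->
  forall m, (a <= m)%nat -> (m <= b)%nat -> agree L (proj1_sig (c m)) (proj1_sig (c' m)).
Proof.
  induction b.
  - exists L. intros c c' _ _ H m h1 h2. assert (m = 0%nat) by lia. subst. auto.
  - destruct IHb as [L1 HL1].
    destruct (agree_of_uc_shift (g b) (Hguc b) L1) as [L2 HL2].
    exists (Nat.max L L2). intros c c' Hc Hc' H m h1 h2.
    destruct (PeanoNat.Nat.eq_dec m (S b)) as [e|e].
    + subst m. eapply agree_mono; eauto. lia.
    + apply (HL1 c c').
      * eapply chain_restrict; eauto.
      * eapply chain_restrict; eauto.
      * rewrite (Hc b), (Hc' b) by lia. apply HL2. eapply agree_mono; eauto. lia.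
      * lia.
      * lia.
Qed.
End Reverse.

Lemma reverse_dir (X : Type) (d : X -> X -> R) (f : X -> X) (x0 : X)
  (A : nat -> Type) (F : forall m, A m -> A m -> Prop)
  (g : forall m, shift_space (A (S m)) (F (S m)) -> shift_space (A m) (F m)) :
  (forall m, unif_cont shift_dist shift_dist (g m)) ->
  (forall m y, g m (shift_map y) = shift_map (g m y)) ->
  mittag_leffler (fun m => shift_space (A m) (F m)) g ->
  forall (h : X -> inv_limit (fun m => shift_space (A m) (F m)) g)
         (k : inv_limit (fun m => shift_space (A m) (F m)) g -> X),
       (forall x, k (h x) = x) -> (forall p, h (k p) = p) ->
       unif_cont d (dPi (fun m => @shift_dist (A m) (F m))) h ->
       unif_cont (dPi (fun m => @shift_dist (A m) (F m))) d k ->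
       (forall x m, proj1_sig (h (f x)) m = shift_map (proj1_sig (h x) m)) ->
  shadowing d f.
Proof.
  intros Hguc Hgc Hml h k Hkh Hhk Hh Hk Hhf.
  set (d0 := proj1_sig (h x0)).
  assert (Hhi : forall n x m, proj1_sig (h (Nat.iter n f x)) m = Nat.iter n shift_map (proj1_sig (h x) m)).
  { induction n; intros x m; simpl; auto. rewrite Hhf, IHn. auto. }
  destruct (ml_Kf g d0 Hml) as [Kf HKf].
  intros eps He.
  destruct (Hk eps He) as [eta [Heta Hk']].
  destruct (dP_small (g := g) eta Heta) as [M [L HML]].
  destruct (levels_agree g Hguc 0 M L) as [LM HLM].
  set (T := S (Kf M)).
  destruct (levels_agree g Hguc M T LM) as [LT HLT].
  destruct (dP_agree (g := g) T LT) as [th [Hth Hag]].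
  destruct (Hh th Hth) as [del [Hdel Hh']].
  exists del. split; auto. intros xs Hxs.
  set (w := fun n => proj1_sig (h (xs n)) T).
  assert (Hw : forall n i, (i <= LT)%nat -> proj1_sig (w n) (S i) = proj1_sig (w (S n)) i).
  { intros n i hi. pose proof (Hag _ _ (Hh' _ _ (Hxs n)) i hi) as E.
    rewrite Hhf in E. simpl in E. exact E. }
  assert (Hz : forall i, ~ F T (proj1_sig (w i) 0%nat) (proj1_sig (w (S i)) 0%nat)).
  { intros i. rewrite <- Hw by lia. apply (proj2_sig (w i)). }
  set (z := exist (fun y => forall i, ~ F T (y i) (y (S i))) (fun i => proj1_sig (w i) 0%nat) Hz).
  assert (Hzw : forall i, (i <= S LT)%nat -> forall n, proj1_sig (w (n + i)%nat) 0%nat = proj1_sig (w n) i).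
  { induction i; intros hi n. rewrite PeanoNat.Nat.add_0_r. auto.
    replace (n + S i)%nat with (S n + i)%nat by lia. rewrite IHi by lia.
    symmetry. apply Hw. lia. }
  assert (Hzn : forall n, agree LT (proj1_sig (Nat.iter n shift_map z)) (proj1_sig (w n))).
  { intros n i hi. rewrite iter_shift. simpl. apply Hzw. lia. }
  destruct (down_chain g d0 T z) as [cz [Hcz Hczz]].
  assert (Hst : stab g M (cz M)).
  { apply (proj2 (HKf M)). exists cz. split; auto. eapply chain_restrict; eauto. lia. }
  destruct (lift_limit g Kf (fun N => proj2 (HKf N)) M cz) as [p Hp]; auto.
  { eapply chain_restrict; eauto. unfold T. pose proof (proj1 (HKf M)). lia. }
  exists (k p). intros n.
  rewrite <- (Hkh (Nat.iter n f (k p))), <- (Hkh (xs n)).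
  apply Hk'. apply HML. intros m Hm.
  rewrite Hhi, Hhk.
  assert (HMT : (M <= T)%nat) by (unfold T; pose proof (proj1 (HKf M)); lia).
  apply (HLM (fun m => Nat.iter n shift_map (proj1_sig p m)) (proj1_sig (h (xs n)))); try lia.
  - apply chain_iter; auto. apply invlim_chain.
  - apply invlim_chain.
  - simpl. rewrite Hp by lia.
    apply (HLT (fun m => Nat.iter n shift_map (cz m)) (proj1_sig (h (xs n)))); try lia.
    + apply chain_iter; auto. eapply chain_restrict; eauto; lia.
    + apply invlim_chain.
    + simpl. rewrite Hczz. apply Hzn.
Qed.

Lemma iter_comm {X} (f : X -> X) i x : Nat.iter i f (f x) = f (Nat.iter i f x).
Proof. induction i; simpl; auto. rewrite IHi. auto. Qed.

Lemma invlim_ext {Xs : nat -> Type} {g : forall m, Xs (S m) -> Xs m} (P Q : inv_limit Xs g) :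
  (forall m, proj1_sig P m = proj1_sig Q m) -> P = Q.
Proof.
  destruct P as [P HP], Q as [Q HQ]. simpl. intros H.
  assert (P = Q) by (apply functional_extensionality_dep; auto). subst.
  f_equal. apply proof_irrelevance.
Qed.

Section Forward.
Variables (X : Type) (d : X -> X -> R) (f : X -> X) (U : nat -> (X -> Prop) -> Prop).
Hypothesis Hmet : is_metric d.
Hypothesis Hsep : separable d.
Hypothesis Hf : unif_cont d d f.
Hypothesis Hdef : defining_sequence d U.
Hypothesis Hcomp : complete_seq U.
Hypothesis Htame : tame_seq d U.

Definition Al (m : nat) := {O : X -> Prop | U m O}.

Lemma uniq_elt m a b x : U m a -> U m b -> a x -> b x -> a = b.
Proof.
  intros Ha Hb Hax Hbx. destruct Hdef as [Hp _].
  destruct (Hp m) as [_ [Hd _]]. apply NNPP. intros Hne. apply (Hd a b Ha Hb Hne x). auto.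
Qed.

Lemma Al_eq m (a b : Al m) : proj1_sig a = proj1_sig b -> a = b.
Proof. destruct a as [a Ha], b as [b Hb]. simpl. intros ->. f_equal. apply proof_irrelevance. Qed.

Lemma cover m x : exists O, U m O /\ O x.
Proof. destruct Hdef as [Hp _]. destruct (Hp m) as [_ [_ Hc]]. apply Hc. Qed.

Definition it m x : Al m :=
  let s := constructive_indefinite_description _ (cover m x) in
  exist _ (proj1_sig s) (proj1 (proj2_sig s)).

Lemma it_in m x : proj1_sig (it m x) x.
Proof. unfold it. destruct (constructive_indefinite_description _ (cover m x)) as [O [H1 H2]]. simpl. auto. Qed.

Lemma it_unique m x (a : Al m) : proj1_sig a x -> a = it m x.
Proof.
  intros H. apply Al_eq. apply (uniq_elt m _ _ x); auto. apply (proj2_sig a). apply (proj2_sig (it m x)).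
  apply it_in.
Qed.

Lemma refine_ex m (a : Al (S m)) : exists O', U m O' /\ forall x, proj1_sig a x -> O' x.
Proof. destruct Hdef as [_ [Hr _]]. apply Hr. apply (proj2_sig a). Qed.

Definition par m (a : Al (S m)) : Al m :=
  let s := constructive_indefinite_description _ (refine_ex m a) in
  exist _ (proj1_sig s) (proj1 (proj2_sig s)).

Lemma par_sup m a x : proj1_sig a x -> proj1_sig (par m a) x.
Proof.
  unfold par. destruct (constructive_indefinite_description _ (refine_ex m a)) as [O [H1 H2]]. simpl. auto.
Qed.

Definition Fl m (a b : Al m) : Prop := ~ exists x, proj1_sig a x /\ proj1_sig b (f x).

Definition Xl m := shift_space (Al m) (Fl m).

Lemma gb_ok m (y : Xl (S m)) : forall i, ~ Fl m (par m (proj1_sig y i)) (par m (proj1_sig y (S i))).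
Proof.
  intros i Hn. apply (proj2_sig y i). intros [x [H1 H2]]. apply Hn. exists x. split; apply par_sup; auto.
Qed.

Definition gb m (y : Xl (S m)) : Xl m := exist _ (fun i => par m (proj1_sig y i)) (gb_ok m y).

Lemma hx_ok m x : forall i, ~ Fl m (it m (Nat.iter i f x)) (it m (Nat.iter (S i) f x)).
Proof. intros i Hn. apply Hn. exists (Nat.iter i f x). split; apply it_in. Qed.

Definition hx m x : Xl m := exist _ (fun i => it m (Nat.iter i f x)) (hx_ok m x).

Lemma h_ok x : forall m, hx m x = gb m (hx (S m) x).
Proof.
  intros m. apply shift_ext. intros i. simpl. symmetry. apply it_unique. apply par_sup. apply it_in.
Qed.

Definition hh x : inv_limit Xl gb := exist _ (fun m => hx m x) (h_ok x).

Lemma dist_pos x y : 0 <= d x y.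
Proof. destruct Hmet as [H _]. auto. Qed.

Lemma dist_eq x y : d x y = 0 -> x = y.
Proof. destruct Hmet as [_ [H _]]. apply H. Qed.

Lemma dist_sym x y : d x y = d y x.
Proof. destruct Hmet as [_ [_ [H _]]]. auto. Qed.

Lemma dist_tri x y z : d x z <= d x y + d y z.
Proof. destruct Hmet as [_ [_ [_ H]]]. auto. Qed.

Lemma zero_dist x y : (forall eps, 0 < eps -> d x y < eps) -> x = y.
Proof.
  intros H. apply dist_eq. pose proof (dist_pos x y).
  destruct (Rle_lt_or_eq_dec 0 (d x y) H0) as [h|h]; auto.
  specialize (H _ h). lra.
Qed.

Lemma diam_small eps : 0 < eps -> exists N, forall n, (N <= n)%nat ->
     forall O, U n O -> forall x y, O x -> O y -> d x y < eps.
Proof. destruct Htame as [H _]. apply H. Qed.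

Lemma small_same x y : (forall n, exists O, U n O /\ O x /\ O y) -> x = y.
Proof.
  intros H. apply zero_dist. intros eps He. destruct (diam_small eps He) as [N HN].
  destruct (H N) as [O [HO [Hx Hy]]]. eapply HN; eauto.
Qed.

Lemma pt_ex (p : inv_limit Xl gb) i : exists x, forall n, proj1_sig (proj1_sig (proj1_sig p n) i) x.
Proof.
  apply (Hcomp (fun n => proj1_sig (proj1_sig (proj1_sig p n) i))).
  - intros n. apply (proj2_sig (proj1_sig (proj1_sig p n) i)).
  - intros n x Hx. rewrite (proj2_sig p n). simpl. apply par_sup. auto.
Qed.

Definition pt p i := proj1_sig (constructive_indefinite_description _ (pt_ex p i)).

Lemma pt_in p i n : proj1_sig (proj1_sig (proj1_sig p n) i) (pt p i).
Proof. unfold pt. destruct (constructive_indefinite_description _ (pt_ex p i)) as [x Hx]. simpl. auto. Qed.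

Lemma pt_succ p i : f (pt p i) = pt p (S i).
Proof.
  apply zero_dist. intros eps He.
  destruct (Hf (eps/2)) as [del [Hdel Hd]]. lra.
  destruct (diam_small (Rmin del (eps/2))) as [N HN].
  { apply Rmin_pos; lra. }
  set (a := proj1_sig (proj1_sig p N) i). set (b := proj1_sig (proj1_sig p N) (S i)).
  assert (Hab : exists x, proj1_sig a x /\ proj1_sig b (f x)).
  { apply NNPP. apply (proj2_sig (proj1_sig p N) i). }
  destruct Hab as [x [Hx Hfx]].
  assert (H1 : d (pt p i) x < del).
  { apply Rlt_le_trans with (Rmin del (eps/2)); [|apply Rmin_l].
    apply (HN N (le_n _) (proj1_sig a) (proj2_sig a)); auto. apply pt_in. }
  assert (H2 : d (f x) (pt p (S i)) < eps/2).
  { apply Rlt_le_trans with (Rmin del (eps/2)); [|apply Rmin_r].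
    apply (HN N (le_n _) (proj1_sig b) (proj2_sig b)); auto. apply pt_in. }
  specialize (Hd _ _ H1). pose proof (dist_tri (f (pt p i)) (f x) (pt p (S i))). lra.
Qed.

Lemma pt_iter p i : Nat.iter i f (pt p 0) = pt p i.
Proof. induction i; simpl; auto. rewrite IHi. apply pt_succ. Qed.

Definition kk p := pt p 0.

Lemma hk p : hh (kk p) = p.
Proof.
  apply invlim_ext. intros m. apply shift_ext. intros i. simpl.
  unfold kk. rewrite pt_iter. symmetry. apply it_unique. apply pt_in.
Qed.

Lemma kh x : kk (hh x) = x.
Proof.
  apply small_same. intros n. exists (proj1_sig (it n x)). split. apply (proj2_sig (it n x)).
  split; [|apply it_in]. unfold kk. apply (pt_in (hh x) 0 n).
Qed.

Lemma hf x m : proj1_sig (hh (f x)) m = shift_map (proj1_sig (hh x) m).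
Proof. apply shift_ext. intros i. simpl. rewrite iter_comm. auto. Qed.

Lemma gb_comm m y : gb m (shift_map y) = shift_map (gb m y).
Proof. apply shift_ext. intros i. reflexivity. Qed.

Lemma gb_uc m : unif_cont shift_dist shift_dist (gb m).
Proof.
  apply uc_shift_of_agree. intros L. exists L. intros u v H i hi. simpl. rewrite H; auto.
Qed.

Lemma Al_countable m : countable (Al m).
Proof.
  destruct Hsep as [D HD].
  assert (Hex : forall a : Al m, exists n, proj1_sig a (D n)).
  { intros [a Ha]. simpl. destruct Hdef as [Hp _]. destruct (Hp m) as [Hne _].
    destruct (Hne a Ha) as [[x Hx] [Hop _]].
    destruct (Hop x Hx) as [r [Hr Hball]].
    destruct (HD x r Hr) as [n Hn]. exists n. apply Hball. auto. }
  exists (fun a => proj1_sig (constructive_indefinite_description _ (Hex a))).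
  intros a b Hab.
  destruct (constructive_indefinite_description _ (Hex a)) as [na Ha].
  destruct (constructive_indefinite_description _ (Hex b)) as [nb Hb]. simpl in Hab. subst nb.
  apply Al_eq. apply (uniq_elt m _ _ (D na)); auto. apply (proj2_sig a). apply (proj2_sig b).
Qed.

Lemma iter_uc L eps : 0 < eps -> exists del, 0 < del /\ forall x y, d x y < del ->
  forall i, (i <= L)%nat -> d (Nat.iter i f x) (Nat.iter i f y) < eps.
Proof.
  revert eps. induction L; intros eps He.
  - exists eps. split; auto. intros x y H i hi. assert (i = 0%nat) by lia. subst. simpl. auto.
  - destruct (Hf eps He) as [d1 [Hd1 H1]].
    destruct (IHL (Rmin eps d1)) as [d2 [Hd2 H2]]. apply Rmin_pos; auto.
    exists d2. split; auto. intros x y H i hi.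
    destruct (PeanoNat.Nat.eq_dec i (S L)) as [e|e].
    + subst i. simpl. apply H1. eapply Rlt_le_trans. apply H2; auto. apply Rmin_r.
    + eapply Rlt_le_trans. apply H2; auto. lia. apply Rmin_l.
Qed.

Lemma sep_same n : exists rho, 0 < rho /\ forall u v, d u v < rho -> it n u = it n v.
Proof.
  destruct Htame as [_ Hs]. destruct (Hs n) as [rho [Hr H]]. exists rho. split; auto.
  intros u v Huv. apply NNPP. intros Hne.
  assert (Hne' : proj1_sig (it n u) <> proj1_sig (it n v)).
  { intros E. apply Hne. apply Al_eq. auto. }
  pose proof (H _ _ (proj2_sig (it n u)) (proj2_sig (it n v)) Hne' u v (it_in n u) (it_in n v)). lra.
Qed.

Lemma same_down j m u v : it (j + m) u = it (j + m) v -> it m u = it m v.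
Proof.
  induction j; simpl; auto. intros H. apply IHj.
  rewrite <- (it_unique (j + m) u (par _ (it (S (j + m)) u))) by (apply par_sup; apply it_in).
  rewrite <- (it_unique (j + m) v (par _ (it (S (j + m)) v))) by (apply par_sup; apply it_in).
  rewrite H. auto.
Qed.

Lemma hh_uc : unif_cont d (dPi (fun m => @shift_dist (Al m) (Fl m))) hh.
Proof.
  intros eps He. destruct (dP_small (g := gb) eps He) as [M [L HML]].
  destruct (sep_same M) as [rho [Hr Hrho]].
  destruct (iter_uc L rho Hr) as [del [Hdel Hd]].
  exists del. split; auto. intros x y Hxy. apply HML. intros m Hm i hi. simpl.
  apply (same_down (M - m)). replace (M - m + m)%nat with M by lia. apply Hrho. apply Hd; auto.
Qed.

Lemma kk_uc : unif_cont (dPi (fun m => @shift_dist (Al m) (Fl m))) d kk.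
Proof.
  intros eps He. destruct (diam_small eps He) as [N HN].
  destruct (dP_agree (g := gb) N 0) as [th [Hth Hag]].
  exists th. split; auto. intros p q Hpq.
  pose proof (Hag p q Hpq 0%nat (le_n _)) as E.
  set (a := proj1_sig (proj1_sig p N) 0%nat) in *.
  apply (HN N (le_n _) (proj1_sig a) (proj2_sig a)).
  - apply pt_in.
  - rewrite E. apply pt_in.
Qed.

Lemma chain_sub (c : forall m, Xl m) N T : chain gb c N T ->
  forall j m, (m + j = T)%nat -> (N <= m)%nat ->
  forall i z, proj1_sig (proj1_sig (c T) i) z -> proj1_sig (proj1_sig (c m) i) z.
Proof.
  intros Hc j. induction j; intros m Hm HN i z Hz.
  - rewrite PeanoNat.Nat.add_0_r in Hm. subst. auto.
  - rewrite (Hc m) by lia. simpl. apply par_sup. apply IHj; auto; lia.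
Qed.

Hypothesis Hshad : shadowing d f.

Lemma orbit_image N : exists T0, forall T, (T0 <= T)%nat -> forall y, stim gb N T y ->
  exists x, y = proj1_sig (hh x) N.
Proof.
  destruct Htame as [_ Hs]. destruct (Hs N) as [rho [Hr Hsep']].
  destruct (Hshad rho Hr) as [del [Hdel Hsh]].
  destruct (diam_small del Hdel) as [T0 HT0].
  exists (Nat.max T0 N). intros T HT y [c [Hc Hy]].
  set (a := proj1_sig (c T)).
  assert (Hq : forall i, exists q, proj1_sig (a i) q /\ proj1_sig (a (S i)) (f q)).
  { intros i. apply NNPP. apply (proj2_sig (c T) i). }
  set (q := fun i => proj1_sig (constructive_indefinite_description _ (Hq i))).
  assert (Hqi : forall i, proj1_sig (a i) (q i) /\ proj1_sig (a (S i)) (f (q i))).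
  { intros i. unfold q. destruct (constructive_indefinite_description _ (Hq i)) as [z Hz]. auto. }
  destruct (Hsh q) as [x Hx].
  { intros n. apply (HT0 T ltac:(lia) (proj1_sig (a (S n))) (proj2_sig (a (S n)))).
    apply Hqi. apply Hqi. }
  exists x. subst y. apply shift_ext. intros i. simpl.
  apply NNPP. intros Hne.
  assert (Hin : proj1_sig (proj1_sig (c N) i) (q i)).
  { apply (chain_sub c N T Hc (T - N)); try lia. apply Hqi. }
  assert (Hne' : proj1_sig (proj1_sig (c N) i) <> proj1_sig (it N (Nat.iter i f x))).
  { intros E. apply Hne. apply Al_eq. auto. }
  pose proof (Hsep' _ _ (proj2_sig (proj1_sig (c N) i)) (proj2_sig (it N (Nat.iter i f x))) Hne'
     (q i) (Nat.iter i f x) Hin (it_in _ _)).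
  specialize (Hx i). rewrite dist_sym in Hx. lra.
Qed.

Lemma ml_forward (x0 : X) : mittag_leffler Xl gb.
Proof.
  apply (stim_ml gb (proj1_sig (hh x0))). intros N.
  destruct (orbit_image N) as [T0 HT0].
  exists (S (Nat.max N T0)). split. lia.
  assert (Hall : forall x T, stim gb N T (proj1_sig (hh x) N)).
  { intros x T. exists (proj1_sig (hh x)). split; auto. apply invlim_chain. }
  intros i Hi y. split; intros H.
  - destruct (HT0 (S (S (Nat.max N T0))) ltac:(lia) y H) as [x ->]. apply Hall.
  - destruct (HT0 (S i) ltac:(lia) y H) as [x ->]. apply Hall.
Qed.
End Forward.

Theorem corollary4p17 (X : Type) (d : X -> X -> R) (f : X -> X)
  (U : nat -> (X -> Prop) -> Prop) :
  is_metric d -> separable d ->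
  unif_cont d d f ->
  defining_sequence d U -> complete_seq U -> tame_seq d U ->
  (shadowing d f <->
   exists (A : nat -> Type) (F : forall m, A m -> A m -> Prop)
          (g : forall m, shift_space (A (S m)) (F (S m)) -> shift_space (A m) (F m)),
     (forall m, countable (A m)) /\
     (forall m, unif_cont shift_dist shift_dist (g m)) /\
     (forall m y, g m (shift_map y) = shift_map (g m y)) /\
     mittag_leffler (fun m => shift_space (A m) (F m)) g /\
     exists (h : X -> inv_limit (fun m => shift_space (A m) (F m)) g)
            (k : inv_limit (fun m => shift_space (A m) (F m)) g -> X),
       (forall x, k (h x) = x) /\ (forall p, h (k p) = p) /\
       unif_cont d (dPi (fun m => @shift_dist (A m) (F m))) h /\
       unif_cont (dPi (fun m => @shift_dist (A m) (F m))) d k /\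
       (forall x m, proj1_sig (h (f x)) m = shift_map (proj1_sig (h x) m))).
Proof.
  intros Hmet Hsep Hf Hdef Hcomp Htame.
  destruct (constructive_indefinite_description _ Hsep) as [D _]. set (x0 := D 0%nat).
  split.
  - intros Hsh.
    exists (Al X U), (Fl X f U), (gb X d f U Hdef).
    split; [intros m; eapply Al_countable; eauto|].
    split; [intros m; apply gb_uc|].
    split; [intros m y; apply gb_comm|].
    split; [apply (ml_forward X d f U Hmet Hdef Htame Hsh x0)|].
    exists (hh X d f U Hdef), (kk X d f U Hdef Hcomp).
    split; [intros x; eapply kh; eauto|].
    split; [intros p; eapply hk; eauto|].
    split; [eapply hh_uc; eauto|].
    split; [eapply kk_uc; eauto|].
    intros x m. apply hf.
  - intros [A [F [g [Hc [Hguc [Hgc [Hml [h [k [H1 [H2 [H3 [H4 H5]]]]]]]]]]]]].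
    apply (reverse_dir X d f x0 A F g Hguc Hgc Hml h k); auto.
Qed.
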